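(* If the action of $H$ on $X$ is weakly admissible (with respect to $\lambda$), then there exists a Borel function $\varphi:X\to[0,\infty)$ with $\varphi\in L^1(X,\lambda)$ and $0<\int_H\varphi(\xi.h)\,dh\le 1$ for $\lambda$-almost every $\xi\in X$.
   Context: $X$ is a standard Borel space; $H$ is a second countable locally compact group with left Haar measure $dh$, acting on $X$ from the right, $(\xi,h)\mapsto\xi.h$, jointly measurably. $\lambda$ is a $\sigma$-finite Borel measure on $X$ which is quasi-invariant, i.e. for each $h\in H$ the measure $B\mapsto\lambda(B.h)$ is equivalent to $\lambda$. The action is called weakly admissible if there exists a Borel function $\varphi:X\to[0,\infty)$ with $0<\int_H\varphi(\xi.h)\,dh<\infty$ for $\lambda$-almost every $\xi\in X$. *)

(* Defs.v *)
From HB Require Import structures.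
From mathcomp Require Import all_boot all_order all_algebra.
From mathcomp Require Import all_classical all_reals all_analysis.
Set Implicit Arguments. Unset Strict Implicit. Unset Printing Implicit Defensive.
Import Order.TTheory GRing.Theory Num.Theory.
Local Open Scope classical_set_scope.
Local Open Scope ring_scope.

Definition is_metric (R : realType) (X : Type) (dist : X -> X -> R) :=
  [/\ forall x y, dist x y = 0 <-> x = y,
      forall x y, dist x y = dist y x &
      forall x y z, dist x z <= dist x y + dist y z].

Definition metric_open (R : realType) (X : Type) (dist : X -> X -> R) (U : set X) :=
  forall x, U x -> exists2 e : R, 0 < e & [set y | dist x y < e] `<=` U.

Definition metric_complete (R : realType) (X : Type) (dist : X -> X -> R) :=
  forall u : nat -> X,
    (forall e : R, 0 < e -> exists N, forall m n, (N <= m)%N -> (N <= n)%N ->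
        dist (u m) (u n) < e) ->
    exists x, forall e : R, 0 < e -> exists N, forall n, (N <= n)%N -> dist (u n) x < e.

Definition metric_separable (R : realType) (X : Type) (dist : X -> X -> R) :=
  exists2 D : set X, countable D &
    forall x (e : R), 0 < e -> exists2 y, D y & dist x y < e.

Definition standard_borel (R : realType) d (X : measurableType d) :=
  exists dist : X -> X -> R,
    [/\ is_metric dist, metric_complete dist, metric_separable dist &
        (@measurable _ X) = <<s metric_open dist >>].

Definition group_laws (H : Type) (mul : H -> H -> H) (inv : H -> H) (one : H) :=
  [/\ forall x y z, mul x (mul y z) = mul (mul x y) z,
      forall x, mul one x = x,
      forall x, mul x one = x,
      forall x, mul (inv x) x = one &
      forall x, mul x (inv x) = one].

Definition sc_lc_group (H : topologicalType) (mul : H -> H -> H) (inv : H -> H) (one : H) :=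
  [/\ group_laws mul inv one,
      continuous (fun p : H * H => mul p.1 p.2),
      continuous inv &
      [/\ hausdorff_space H, locally_compact [set: H] & @second_countable H]].

Definition borelType (H : ptopologicalType) := g_sigma_algebraType (@open H).

Definition left_haar (R : realType) (H : ptopologicalType) (mul : H -> H -> H)
    (mu : {measure set (borelType H) -> \bar R}) :=
  [/\ forall K : set H, compact K -> (mu K < +oo)%E,
      forall A : set (borelType H), measurable A ->
        mu A = ereal_inf [set mu U | U in [set U : set H | open U /\ A `<=` U]],
      forall U : set H, open U ->
        mu U = ereal_sup [set mu K | K in [set K : set H | compact K /\ K `<=` U]],
      mu setT != 0%E &
      forall (g : H) (A : set (borelType H)), measurable A -> mu (mul g @` A) = mu A].

Definition measurable_right_action d (X : measurableType d) (H : ptopologicalType)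
    (mul : H -> H -> H) (one : H) (act : X -> H -> X) :=
  [/\ forall xi, act xi one = xi,
      forall xi g h, act (act xi g) h = act xi (mul g h) &
      measurable_fun setT (fun p : X * borelType H => act p.1 p.2)].

Definition quasi_invariant (R : realType) d (X : measurableType d) (H : Type)
    (act : X -> H -> X) (lambda : {measure set X -> \bar R}) :=
  forall (h : H) (B : set X), measurable B ->
    (lambda ((fun xi => act xi h) @` B) = 0)%E <-> (lambda B = 0)%E.

Definition weakly_admissible (R : realType) d (X : measurableType d)
    (H : ptopologicalType) (act : X -> H -> X)
    (mu : {measure set (borelType H) -> \bar R}) (lambda : {measure set X -> \bar R}) :=
  exists phi : X -> R,
    [/\ measurable_fun setT phi, (forall xi, 0 <= phi xi) &
        {ae lambda, forall xi,
          (0 < \int[mu]_(h in [set: borelType H]) (phi (act xi h))%:E < +oo)%E}].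

(* Main.v *)
Require Import Defs.
From HB Require Import structures.
From mathcomp Require Import all_boot all_order all_algebra.
From mathcomp Require Import all_classical all_reals all_analysis.
From mathcomp Require Import measurable_realfun.
Import Order.TTheory GRing.Theory Num.Theory.
Import numFieldNormedType.Exports.
Local Open Scope classical_set_scope.
Local Open Scope ring_scope.
Set Implicit Arguments. Unset Strict Implicit.

Lemma xexpR_le1 (R : realType) (x : R) : 0 <= x -> x * expR (- x) <= 1.
Proof.
move=> x0; rewrite expRN ler_pdivrMr ?expR_gt0 // mul1r.
by apply: le_trans (expR_ge1Dx x); rewrite lerDr.
Qed.

Lemma pos_transfer d (T : measurableType d) (R : realType)
  (m : {measure set T -> \bar R}) (f g : T -> \bar R) :
  measurable_fun setT f -> measurable_fun setT g ->
  (forall x, 0 <= f x)%E -> (forall x, 0 <= g x)%E ->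
  (forall x, 0 < f x -> 0 < g x)%E ->
  (0 < \int[m]_(x in setT) f x)%E -> (0 < \int[m]_(x in setT) g x)%E.
Proof.
move=> mf mg f0 g0 fg If.
rewrite lt0e integral_ge0 // andbT; apply/negP => /eqP Ig0.
have : (\int[m]_(x in setT) `|g x| = 0)%E.
  by rewrite -Ig0; apply: eq_integral => x _; rewrite gee0_abs.
move/(ae_eq_integral_abs m measurableT mg) => [N [mN mN0 sN]].
move: If; rewrite (ge0_negligible_integral (D := setT) mN measurableT mf) //.
suff -> : (\int[m]_(x in setT `\` N) f x = \int[m]_(x in setT `\` N) (cst 0%E) x)%E.
  by rewrite integral0 ltxx.
apply: eq_integral => x; rewrite inE => -[_ Nx] /=.
have gx : g x = 0%E.
  apply: contrapT => gx; apply: Nx; apply: sN => /= /(_ I); exact: gx.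
have := f0 x; rewrite le_eqVlt => /orP[/eqP <- //|/fg].
by rewrite gx ltxx.
Qed.

Section PhiM.
Context (R : realType) d (X : measurableType d) (H : ptopologicalType)
  (mu : {measure set (borelType H) -> \bar R}) (lambda : {measure set X -> \bar R})
  (hmu : sigma_finite setT mu) (hl : sigma_finite setT lambda).
Definition smu : set (borelType H) -> \bar R := mu.
HB.instance Definition _ := Measure.copy smu mu.
HB.instance Definition _ := @Measure_isSigmaFinite.Build _ _ _ smu hmu.
Lemma Phi_measurable0 (f : X * borelType H -> \bar R) :
  measurable_fun setT f -> (forall p, 0 <= f p)%E ->
  measurable_fun setT (fun xi => (\int[mu]_(h in [set: borelType H]) f (xi, h))%E).
Proof.
move=> mf f0.
exact: (@measurable_fun_fubini_tonelli_F _ _ X (borelType H) R smu f mf f0).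
Qed.
End PhiM.

Lemma rho_exists d (T : measurableType d) (R : realType)
  (m : {measure set T -> \bar R}) : sigma_finite setT m ->
  exists rho : T -> R, [/\ measurable_fun setT rho, (forall x, 0 < rho x <= 1) &
    m.-integrable setT (fun x => (rho x)%:E)].
Proof.
move=> [F UF mF].
pose a n : R := 1 / (2 ^ n.+1)%:R.
have a0 n : 0 < a n by rewrite /a divr_gt0 // ltr0n expn_gt0.
pose w n : R := a n * expR (- fine (m (F n))).
have w0 n : 0 < w n by rewrite mulr_gt0 // expR_gt0.
have m0 n : 0 <= fine (m (F n)) by rewrite fine_ge0.
have wa n : w n <= a n.
  by rewrite /w; apply: ler_piMr; [exact: ltW | rewrite expR_le1 oppr_le0].
pose t n x : \bar R := (w n * \1_(F n) x)%:E.
have t0 n x : (0 <= t n x)%E by rewrite lee_fin mulr_ge0 // ltW.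
pose S x : \bar R := (\sum_(n <oo) t n x)%E.
have Sa : (\sum_(n <oo) (a n)%:E <= 1)%E.
  have := @epsilon_trick R (fun _ => 0%E) 1 xpredT (fun _ => lexx 0%E) ler01.
  rewrite [X in (_ <= X + _)%E]eseries0 // add0e; apply: le_trans; apply: lee_nneseries => // n _.
    by rewrite lee_fin ltW.
  by rewrite add0e.
have S1 x : (S x <= 1)%E.
  apply: le_trans Sa; apply: lee_nneseries => // n _.
  rewrite /t lee_fin /indic; case: (_ \in _); rewrite ?mulr1 ?mulr0 //.
  exact: ltW.
have S0 x : (0 < S x)%E.
  have : setT x by [].
  rewrite UF => -[n _ Fnx].
  apply: (@lt_le_trans _ _ (\sum_(0 <= i < n.+1) t i x)%E); last first.
    exact: nneseries_lim_ge.
  rewrite big_nat_recr //= (@lt_le_trans _ _ (t n x)) //.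
    by rewrite /t indicE mem_set // mulr1 lte_fin.
  by rewrite leeDr // sume_ge0.
have mt n : measurable_fun setT (t n).
  apply/measurable_EFinP; apply: measurable_funM => //.
  exact: measurable_indic (mF n).1.
have mS : measurable_fun setT S.
  exact: (ge0_emeasurable_sum (P := xpredT)).
exists (fun x => fine (S x)); split.
- exact: measurableT_comp.
- move=> x; rewrite fine_gt0 ?S0 ?(le_lt_trans (S1 x)) ?ltry //=.
  by rewrite -lee_fin fineK ?S1 // ge0_fin_numE ?(le_lt_trans (S1 x)) ?ltry // ltW.
- apply/integrableP; split; first exact/measurable_EFinP/measurableT_comp.
  have Sfin x : S x \is a fin_num.
    by rewrite ge0_fin_numE ?(le_lt_trans (S1 x)) ?ltry // ltW.
  have -> : (\int[m]_(x in setT) `|(fine (S x))%:E| = \int[m]_(x in setT) S x)%E.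
    by apply: eq_integral => x _; rewrite fineK // gee0_abs // ltW.
  rewrite (integral_nneseries m measurableT mt (fun n x _ => t0 n x)).
  apply: (le_lt_trans _ (le_lt_trans Sa (ltry 1))).
  apply: lee_nneseries => [n _ _|n _]; first exact: integral_ge0.
  have -> : (\int[m]_(x in setT) t n x = (w n)%:E * \int[m]_(x in setT) (\1_(F n) x)%:E)%E.
    have mi : measurable_fun setT (fun x => (\1_(F n) x : R)%:E).
      by apply/measurable_EFinP; exact: measurable_indic (mF n).1.
    rewrite -ge0_integralZl_EFin //; last exact: ltW.
  rewrite integral_indic ?(mF n).1 // ?setIT.
  have mfin : m (F n) \is a fin_num by rewrite ge0_fin_numE ?(mF n).2.
  rewrite -(fineK mfin) -EFinM lee_fin /w -mulrA.
  by apply: ler_piMr; [exact: ltW | rewrite mulrC xexpR_le1].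
exact: (mF n).1.
Qed.

Lemma haar_sigma_finite (R : realType) (H : ptopologicalType) (mul : H -> H -> H) (inv : H -> H) (one : H)
    (mu : {measure set (borelType H) -> \bar R}) :
  sc_lc_group mul inv one -> left_haar mul mu -> sigma_finite setT mu.
Proof.
move=> [_ _ _ [hH lcH [B cB [Bo Bb]]]] [Kfin _ _ _ _].
have /pcard_surjP [g gs] := cB.
have mK (K : set H) : compact K -> measurable (K : set (borelType H)).
  move=> cK; rewrite -[K]setCK; apply: measurableC.
  apply: sub_sigma_algebra; rewrite /= openC; exact: compact_closed.
pose good (b : set H) := B b /\ exists K : set H, compact K /\ b `<=` K.
exists (fun n => if pselect (good (g n)) then (g n : set (borelType H)) else set0).
  apply/seteqP; split => // x _.
  have := lcH x I; case => K0 nU [cU _]; rewrite withinET in nU.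
  have := Bb x K0 nU; case => b /= [Bb0 bx] bU.
  have [n _ gnb] := gs b Bb0.
  exists n => //; destruct (pselect (good (g n))) as [pg|ng]; first by rewrite /= gnb.
  by exfalso; apply: ng; rewrite gnb; split => //; exists K0.
move=> n; destruct (pselect (good (g n))) as [pg|ng]; last by rewrite /= measure0; split => //.
have [Bgn [K [cK gK]]] := pg.
split; first by apply: sub_sigma_algebra; exact: Bo.
apply: (le_lt_trans _ (Kfin K cK)); apply: le_measure => //.
- by rewrite inE; apply: sub_sigma_algebra; exact: Bo.
- by rewrite inE; exact: mK.
Qed.

Lemma translate_integral (R : realType) (H : ptopologicalType) (mul : H -> H -> H) (inv : H -> H) (one : H)
    (mu : {measure set (borelType H) -> \bar R}) :
  sc_lc_group mul inv one -> left_haar mul mu ->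
  forall (g : H) (f : borelType H -> \bar R), measurable_fun setT f -> (forall x, 0 <= f x)%E ->
  (\int[mu]_(h in [set: borelType H]) f (mul g h) = \int[mu]_(h in [set: borelType H]) f h)%E.
Proof.
move=> [[mA m1 _ mV1 m1V] cmul _ _] [_ _ _ _ inv_mu] g f mf f0.
have cg : continuous (mul g).
  move=> h.
  have c1 : (fun h' : H => (g, h')) @ h --> (g, h).
    move=> W /= [[U V]] [/= Ug Vh] UVW.
    apply: (@filterS _ _ _ V); last exact: Vh.
    by move=> y Vy; apply: UVW; split => //=; exact: nbhs_singleton.
  have c2 := cmul (g, h).
  have c3 := cvg_comp _ _ c1 c2.
  exact: c3.
have mg : measurable_fun [set: borelType H] (mul g : borelType H -> borelType H).
  apply: (@measurability _ _ (borelType H) (borelType H) setT (mul g) open erefl).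
  move=> _ [B oB <-]; apply: sub_sigma_algebra; rewrite setTI.
  by move/continuousP : cg; apply.
have := ge0_integral_pushforward (phi := mul g : borelType H -> borelType H) mg mu measurableT mf (fun y _ => f0 y).
rewrite preimage_setT => <-.
apply: eq_measure_integral => A mAm _.
change (mu (mul g @^-1` A) = mu A).
have -> : (mul g @^-1` A) = mul (inv g) @` A.
  apply/seteqP; split => [x /= Ax|_ [a Aa <-]].
    by exists (mul g x) => //; rewrite mA mV1 m1.
  by rewrite /= mA m1V m1.
exact: inv_mu mAm.
Qed.

Lemma Phi_measurable (R : realType) d (X : measurableType d) (H : ptopologicalType)
    (mu : {measure set (borelType H) -> \bar R}) (lambda : {measure set X -> \bar R})
    (f : X * borelType H -> \bar R) :
  sigma_finite setT mu -> sigma_finite setT lambda ->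
  measurable_fun setT f -> (forall p, 0 <= f p)%E ->
  measurable_fun setT (fun xi => (\int[mu]_(h in [set: borelType H]) f (xi, h))%E).
Proof. by move=> hmu _; exact: Phi_measurable0. Qed.

Unset Implicit Arguments. Set Strict Implicit.

Theorem mainTheorem4 (R : realType) (d : measure_display) (X : measurableType d)
    (H : ptopologicalType) (mul : H -> H -> H) (inv : H -> H) (one : H)
    (mu : {measure set (borelType H) -> \bar R})
    (act : X -> H -> X) (lambda : {measure set X -> \bar R}) :
  standard_borel R X ->
  sc_lc_group mul inv one ->
  left_haar mul mu ->
  measurable_right_action mul one act ->
  sigma_finite setT lambda ->
  quasi_invariant act lambda ->
  weakly_admissible act mu lambda ->
  exists phi : X -> R,
    [/\ measurable_fun setT phi, (forall xi, 0 <= phi xi),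
        lambda.-integrable setT (fun xi => (phi xi)%:E) &
        {ae lambda, forall xi,
          (0 < \int[mu]_(h in [set: borelType H]) (phi (act xi h))%:E <= 1)%E}].
Proof.
move=> _ hG hmu hact hlam _ [phi [mphi phi0 hae]].
have [act1 actM mact] := hact.
have hmusf := haar_sigma_finite hG hmu.
have mf : measurable_fun setT (fun p : X * borelType H => (phi (act p.1 p.2))%:E).
  by apply/measurable_EFinP; apply: measurableT_comp mphi mact.
have mactx xi : measurable_fun setT (fun h : borelType H => act xi h).
  exact: (measurable_fun_pair2 (f := fun p : X * borelType H => act p.1 p.2)).
have mfx xi : measurable_fun setT (fun h : borelType H => (phi (act xi h))%:E).
  by apply: (measurable_fun_pair2 (f := fun p : X * borelType H => (phi (act p.1 p.2))%:E)).
pose Phi xi := (\int[mu]_(h in [set: borelType H]) (phi (act xi h))%:E)%E.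
have mPhi : measurable_fun setT Phi.
  apply: (Phi_measurable hmusf hlam mf) => p; by rewrite lee_fin.
have Phi0 xi : (0 <= Phi xi)%E by apply: integral_ge0 => h _; rewrite lee_fin.
have PhiI xi g : Phi (act xi g) = Phi xi.
  rewrite /Phi; under eq_integral => h _ do rewrite actM.
  apply: (translate_integral hG hmu g (f := fun h => (phi (act xi h))%:E)) => //.
  by move=> h; rewrite lee_fin.
have [rho [mrho rho01 irho]] := rho_exists hlam.
pose k xi := expR (- fine (Phi xi)).
have k01 xi : 0 < k xi <= 1.
  by rewrite expR_gt0 /= expR_le1 oppr_le0 fine_ge0.
have pe xi : 0 <= phi xi * expR (- phi xi) <= 1.
  by rewrite mulr_ge0 ?expR_ge0 //= xexpR_le1.
have mk : measurable_fun setT k.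
  apply: measurableT_comp; first exact: measurable_expR.
  by apply: measurable_funN; apply: measurableT_comp => //.
have mpe : measurable_fun setT (fun xi => phi xi * expR (- phi xi)).
  apply: measurable_funM => //; apply: measurableT_comp; first exact: measurable_expR.
  exact: measurable_funN.
pose psi xi := phi xi * expR (- phi xi) * k xi * rho xi.
have mpsi : measurable_fun setT psi.
  by apply: measurable_funM => //; apply: measurable_funM.
have psi0 xi : 0 <= psi xi.
  have /andP[] := pe xi; have /andP[] := k01 xi; have /andP[] := rho01 xi.
  move=> *; rewrite /psi mulr_ge0 // ?mulr_ge0 // ltW //.
exists psi; split => //.
- apply: (le_integrable (g := fun x => (rho x)%:E) measurableT) => //.
    exact/measurable_EFinP.
  move=> xi _; have /andP[a1 a2] := pe xi; have /andP[b1 b2] := k01 xi; have /andP[c1 c2] := rho01 xi.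
  rewrite !abse_EFin lee_fin (ger0_norm (psi0 xi)) ger0_norm; last exact: ltW.
  rewrite /psi -(mul1r (rho xi)); apply: ler_pM.
  + by rewrite mulr_ge0 // ltW.
  + by rewrite mul1r ltW.
  + by rewrite mulr_ile1 // ltW.
  + by rewrite mul1r.
- apply: filterS hae.
  move=> xi /andP[P0 Poo].
  have Phir : Phi xi = (fine (Phi xi))%:E by rewrite fineK // ge0_fin_numE.
  set r := fine (Phi xi) in Phir.
  have r0 : 0 < r by rewrite /r fine_gt0 // P0 Poo.
  have kI h : k (act xi h) = expR (- r) by rewrite /k PhiI.
  have mpsix : measurable_fun setT (fun h : borelType H => (psi (act xi h))%:E).
    by apply/measurable_EFinP; apply: measurableT_comp mpsi (mactx xi).
  apply/andP; split.
    apply: (@pos_transfer _ _ _ mu (fun h => (phi (act xi h))%:E)) => //.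
    + by move=> h; rewrite lee_fin.
    + by move=> h; rewrite lee_fin.
    move=> h; rewrite !lte_fin => ph.
    rewrite /psi kI; have /andP[? _] := rho01 (act xi h).
    by rewrite !mulr_gt0 // expR_gt0.
  apply: (@le_trans _ _ (\int[mu]_(h in [set: borelType H]) ((phi (act xi h))%:E * (expR (- r))%:E))%E).
    apply: ge0_le_integral => //.
    + by move=> h _; rewrite lee_fin.
    + by apply: emeasurable_funM => //.
    move=> h _; rewrite -EFinM lee_fin /psi kI.
    have /andP[a1 a2] := pe (act xi h); have /andP[c1 c2] := rho01 (act xi h).
    have p0 := phi0 (act xi h).
    rewrite -(mulr1 (phi (act xi h) * expR (- r))); apply: ler_pM.
    + by rewrite mulr_ge0 // expR_ge0.
    + exact: ltW.
    + rewrite mulrAC -[X in _ <= X]mulr1; apply: ler_pM.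
      * by rewrite mulr_ge0 // expR_ge0.
      * exact: expR_ge0.
      * by [].
      * by rewrite expR_le1 oppr_le0.
    + exact: c2.
  rewrite ge0_integralZr //; last by move=> h _; rewrite lee_fin.
  rewrite -/(Phi xi) Phir -EFinM lee_fin xexpR_le1 // ltW //.
Qed.
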